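(* For all $C,\delta>0$ there are $\varepsilon>0$ and $n_0\in\mathbb N$ such that every $C$-bipartite-Ramsey graph $G=(V_1,V_2,E)$ with $|V_1|,|V_2|\ge n_0$ is $(\delta,\varepsilon)$-bipartite-rich.
   Context: A bipartite graph $G=(V_1,V_2,E)$ has vertex set $V_1\sqcup V_2$ and edge set $E\subset V_1\times V_2$; $N(v)$ is the neighbourhood of $v$ and $\overline{N}(v)$ its complement in the opposite class. Given $C>0$, $G$ is called $C$-bipartite-Ramsey if for all integers $t_1\ge C\log_2|V_1|$ and $t_2\ge C\log_2|V_2|$ there are no $T_1\subset V_1$, $T_2\subset V_2$ with $|T_1|=t_1$, $|T_2|=t_2$ such that all pairs in $T_1\times T_2$ are edges, or all are non-edges. Given $\delta,\varepsilon>0$, $G$ is $(\delta,\varepsilon)$-bipartite-rich if for each $i\in\{1,2\}$: for every $W\subset V_i$ with $|W|\ge\delta|V_i|$, there are at most $|V_{3-i}|^{1/5}$ vertices $v\in V_{3-i}$ such that $|N(v)\cap W|\le\varepsilon|W|$ or $|\overline{N}(v)\cap W|<\varepsilon|W|$. *)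

(* Defs.v *)
From mathcomp Require Import all_boot.
From Stdlib Require Import Reals.

Set Implicit Arguments. Unset Strict Implicit. Unset Printing Implicit Defensive.

Definition Rleb (x y : R) : bool := if Rle_dec x y then true else false.
Definition Rltb (x y : R) : bool := if Rlt_dec x y then true else false.

Definition log2 (x : R) : R := (ln x / ln 2)%R.

Definition bipartite_ramsey (V1 V2 : finType) (E : V1 -> V2 -> bool) (C : R) : Prop :=
  forall t1 t2 : nat,
    (C * log2 (INR #|V1|) <= INR t1)%R ->
    (C * log2 (INR #|V2|) <= INR t2)%R ->
    ~ (exists (T1 : {set V1}) (T2 : {set V2}),
          #|T1| = t1 /\ #|T2| = t2 /\
          ((forall x y, x \in T1 -> y \in T2 -> E x y) \/
           (forall x y, x \in T1 -> y \in T2 -> ~~ E x y))).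

Definition rich_side (A B : finType) (F : A -> B -> bool) (delta eps : R) : Prop :=
  forall W : {set B},
    (delta * INR #|B| <= INR #|W|)%R ->
    (INR #|[set a : A |
              Rleb (INR #|[set b in W | F a b]|) (eps * INR #|W|) ||
              Rltb (INR #|[set b in W | ~~ F a b]|) (eps * INR #|W|)]|
       <= Rpower (INR #|A|) (1/5))%R.

(* (delta, eps)-bipartite-rich: the condition for i = 1 (W in V1, v in V2)
   and for i = 2 (W in V2, v in V1). *)
Definition bipartite_rich (V1 V2 : finType) (E : V1 -> V2 -> bool) (delta eps : R) : Prop :=
  rich_side (fun (y : V2) (x : V1) => E x y) delta eps /\
  rich_side E delta eps.

(* Main.v *)
Require Import Defs.
From mathcomp Require Import all_boot zify.
From Stdlib Require Import Reals Lra Lia.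
From Stdlib Require Znat.

Set Implicit Arguments. Unset Strict Implicit. Unset Printing Implicit Defensive.


Lemma card_split (T : finType) (X : {set T}) (p : pred T) :
  #|[set x in X | p x]| + #|[set x in X | ~~ p x]| = #|X|.
Proof.
rewrite -(cardsID [set x | p x] X); congr (_ + _); apply: eq_card => x;
by rewrite !inE // andbC.
Qed.

Lemma exists_sub (T : finType) (P : {set T}) k :
  k <= #|P| -> exists Q : {set T}, Q \subset P /\ #|Q| = k.
Proof.
elim: k => [|k IH] hk; first by exists set0; rewrite sub0set cards0.
have [Q [sQ cQ]] := IH (ltnW hk).
have : 0 < #|P :\: Q| by rewrite cardsD (setIidPr sQ) cQ subn_gt0.
case/card_gt0P => x; rewrite inE => /andP [xQ xP].
exists (x |: Q); split; first by rewrite subUset sub1set xP sQ.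
by rewrite cardsU1 xQ cQ.
Qed.

Lemma halving (A B : finType) (F : A -> B -> bool) (s : seq A) :
  forall B0 : {set B}, exists B' : {set B}, B' \subset B0 /\
    #|B0| <= expn 2 (size s) * #|B'| /\
    (forall a, a \in s -> (forall b, b \in B' -> F a b) \/ (forall b, b \in B' -> ~~ F a b)).
Proof.
elim: s => [|a s IH] B0.
  by exists B0; split => //; rewrite expn0 mul1n.
set B1 := [set b in B0 | F a b]; set B2 := [set b in B0 | ~~ F a b].
have hs : #|B1| + #|B2| = #|B0| by apply: card_split.
have [le12|lt21] := leqP #|B1| #|B2|.
- have [B' [sB' [cB' hB']]] := IH B2.
  exists B'; split; first by apply: subset_trans sB' _; apply/subsetP => x; rewrite inE => /andP[].
  split; first by rewrite expnS -mulnA; move: cB'; set m := _ * #|B'|; lia.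
  move=> a'; rewrite inE => /orP [/eqP -> | ha']; last exact: hB'.
  right => b /(subsetP sB'); rewrite inE => /andP [].
  done.
- have [B' [sB' [cB' hB']]] := IH B1.
  exists B'; split; first by apply: subset_trans sB' _; apply/subsetP => x; rewrite inE => /andP[].
  split; first by rewrite expnS -mulnA; move: cB'; set m := _ * #|B'|; lia.
  move=> a'; rewrite inE => /orP [/eqP -> | ha']; last exact: hB'.
  left => b /(subsetP sB'); rewrite inE => /andP [].
  done.
Qed.

Lemma relation (A B : finType) (F : A -> B -> bool) (C : R) tA tB :
  bipartite_ramsey F C -> (C * log2 (INR #|A|) <= INR tA)%R ->
  (C * log2 (INR #|B|) <= INR tB)%R -> tA.*2 <= #|A| ->
  #|B| <= expn 2 tA.*2 * tB.
Proof.
move=> hR hA hB hsz.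
have := @exists_sub A [set: A] tA.*2; rewrite cardsT => /(_ hsz) [Q [_ cQ]].
have [B' [_ [cB' hB']]] := halving F (enum Q) [set: B].
rewrite cardsT -cardE cQ in cB'.
have [le|lt] := leqP tB #|B'|; last first.
  by apply: (leq_trans cB'); rewrite leq_mul2l ltnW // orbT.
exfalso.
have [TB [sTB cTB]] := exists_sub le.
have hs := card_split Q (fun a => [forall b in B', F a b]).
have [h1|h2] := leqP tA #|[set a in Q | [forall b in B', F a b]]|.
- have [TA [sTA cTA]] := exists_sub h1.
  apply: (hR tA tB hA hB); exists TA, TB; split => //; split => //; left.
  move=> x y /(subsetP sTA); rewrite inE => /andP [_ /forallP hx] /(subsetP sTB) hy.
  by have := hx y; rewrite hy.
- have h2' : tA <= #|[set a in Q | ~~ [forall b in B', F a b]]| by lia.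
  have [TA [sTA cTA]] := exists_sub h2'.
  apply: (hR tA tB hA hB); exists TA, TB; split => //; split => //; right.
  move=> x y /(subsetP sTA); rewrite inE => /andP [xQ hx] /(subsetP sTB) hy.
  have := hB' x; rewrite mem_enum => /(_ xQ) [hl|]; last by apply.
  by exfalso; move/negP: hx; apply; apply/forallP => b; apply/implyP; apply: hl.
Qed.

Lemma card_sum (T : finType) (X : {set T}) (p : pred T) :
  #|[set x in X | p x]| = \sum_(x in X) (p x : nat).
Proof.
rewrite -sum1_card (eq_bigl (fun x => (x \in X) && p x)); last by move=> x; rewrite inE.
rewrite big_mkcondr; apply: eq_bigr => x _; by case: (p x).
Qed.

Lemma forall_setU1 (B : finType) (T : {set B}) b (q : pred B) :
  [forall b' in b |: T, q b'] = q b && [forall b' in T, q b'].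
Proof.
apply/forall_inP/andP.
- move=> h; split; first by apply: h; rewrite setU11.
  by apply/forall_inP => x hx; apply: h; rewrite setU1r.
- case=> hb /forall_inP hT x; rewrite in_setU1 => /orP [/eqP -> //|]; exact: hT.
Qed.

Lemma greedy (A B : finType) (F : A -> B -> bool) (W : {set B}) (S : {set A}) (N : nat) :
  (forall a, a \in S -> N * #|[set b in W | F a b]| <= #|W|) ->
  forall k, k.*2 <= #|W| -> exists T : {set B}, T \subset W /\ #|T| = k /\
   expn (N - 2) k * #|S| <= expn N k * #|[set a in S | [forall b in T, ~~ F a b]]|.
Proof.
move=> hdeg; elim=> [|k IH] hk.
  exists set0; split; first exact: sub0set. split; first exact: cards0.
  rewrite !expn0 !mul1n; apply: subset_leq_card; apply/subsetP => a ha.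
  by rewrite inE ha /=; apply/forall_inP => b; rewrite in_set0.
have [T [sT [cT hT]]] : exists T : {set B}, T \subset W /\ #|T| = k /\ expn (N - 2) k * #|S| <= expn N k * #|[set a in S | [forall b in T, ~~ F a b]]| by apply: IH; lia.
set S' := [set a in S | [forall b in T, ~~ F a b]].
set W' := W :\: T.
set w := #|W|.
have cW' : #|W'| = w - k by rewrite cardsD (setIidPr sT) cT.
have W'pos : 0 < #|W'| by rewrite cW'; lia.
set cnt := fun b => #|[set a in S' | F a b]|.
have hsum : N * (\sum_(b in W') cnt b) <= #|S'| * w.
  have -> : \sum_(b in W') cnt b = \sum_(a in S') #|[set b in W' | F a b]|.
    rewrite /cnt (eq_bigr (fun b => \sum_(a in S') (F a b : nat))); last first.
      by move=> b _; rewrite card_sum.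
    rewrite exchange_big; apply: eq_bigr => a _; by rewrite card_sum.
  rewrite big_distrr /= -sum_nat_const; apply: leq_sum => a ha.
  apply: leq_trans (hdeg a _); last by move: ha; rewrite inE => /andP [].
  rewrite leq_mul2l; apply/orP; right; apply: subset_leq_card.
  apply/subsetP => b; rewrite !inE => /andP [/andP [_ ->] ->]; done.
have [b bW' hb] : exists2 b, b \in W' & N * cnt b * #|W'| <= #|S'| * w.
  apply/exists_inP; have [//|/exists_inPn hn] := boolP [exists b in W', N * cnt b * #|W'| <= #|S'| * w]; exfalso.
  have : \sum_(b in W') (#|S'| * w).+1 <= \sum_(b in W') (N * cnt b * #|W'|).
    by apply: leq_sum => b hb; have := hn b hb; rewrite -ltnNge.
  rewrite sum_nat_const -big_distrl -big_distrr /=.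
  move: hsum W'pos; set s := #|S'| * w; set P := N * _; move=> h1 h2 h3.
  have : #|W'| * s.+1 <= s * #|W'| by apply: (leq_trans h3); rewrite leq_mul2r h1 orbT.
  rewrite mulnS; lia.
have hNc : N * cnt b <= (#|S'|).*2.
  have wpos : 0 < w by lia.
  rewrite -(leq_pmul2r wpos).
  apply: (@leq_trans (N * cnt b * (#|W'|).*2)); first by rewrite leq_mul2l cW'; lia.
  by rewrite -!muln2 mulnA [X in _ <= X]mulnAC leq_mul2r hb orbT.
move: bW'; rewrite inE => /andP [bT bW].
exists (b |: T); split; first by rewrite subUset sub1set bW sT.
split; first by rewrite cardsU1 bT cT.
have eS : [set a in S | [forall b0 in b |: T, ~~ F a b0]] = [set a in S' | ~~ F a b].
  apply/setP => a; rewrite !inE forall_setU1; case: (a \in S) => //=; by rewrite andbC.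
rewrite eS; have hs := card_split S' (F ^~ b).
rewrite /cnt /= in hNc.
move: hNc hs; set c := #|[set a in S' | F a b]|; set s2 := #|[set a in S' | ~~ F a b]|.
move=> hNc hs.
have hcs : c <= #|S'| by lia.
have key : (N - 2) * #|S'| <= N * s2.
  have -> : s2 = #|S'| - c by lia.
  rewrite mulnBr mulnBl; move: hNc hcs; rewrite -muln2 mulnC; lia.
rewrite !expnS -!mulnA; apply: leq_trans (leq_mul (leqnn _) hT) _.
by rewrite mulnCA [X in _ <= X]mulnCA leq_mul2l key orbT.
Qed.

Local Open Scope R_scope.

Lemma INR_addn (m n : nat) : INR (m + n)%nat = INR m + INR n.
Proof. exact: plus_INR. Qed.

Lemma INR_muln (m n : nat) : INR (m * n)%nat = INR m * INR n.
Proof. exact: mult_INR. Qed.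

Lemma INR_expn (m n : nat) : INR (expn m n) = INR m ^ n.
Proof. elim: n => [|n IH]; first by rewrite expn0. by rewrite expnS INR_muln IH. Qed.

Lemma INR_leq (m n : nat) : (m <= n)%nat -> INR m <= INR n.
Proof. by move/leP; apply: le_INR. Qed.

Lemma INR_leq_inv (m n : nat) : INR m <= INR n -> (m <= n)%nat.
Proof. by move/INR_le/leP. Qed.

Lemma INR_ltn_inv (m n : nat) : INR m < INR n -> (m < n)%nat.
Proof. by move/INR_lt/ltP. Qed.

Lemma ceil_nat r : 0 <= r -> exists n : nat, r <= INR n /\ INR n <= r + 1.
Proof.
move=> hr; have [h1 h2] := archimed r.
have hz : (0 <= up r)%Z by apply: le_IZR; lra.
exists (Z.to_nat (up r)); rewrite INR_IZR_INZ Znat.Z2Nat.id //; lra.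
Qed.

Lemma ln_le' x y : 0 < x -> x <= y -> ln x <= ln y.
Proof. move=> hx [h|->]; [left; exact: ln_increasing | lra]. Qed.

Lemma exp_le' x y : x <= y -> exp x <= exp y.
Proof. move=> [h|->]; [left; exact: exp_increasing | lra]. Qed.

Lemma exp_le_inv x y : exp x <= exp y -> x <= y.
Proof. move=> h; destruct (Rle_lt_dec x y) as [|hl] => //. have := exp_increasing _ _ hl; lra. Qed.

Lemma ln2_bounds : 0 < ln 2 < 1.
Proof.
have := ln_lt_2; split; first lra.
rewrite -[X in _ < X](ln_exp 1); apply: ln_increasing; first lra.
have := exp_ineq1 1; lra.
Qed.

Lemma exp_growth K L : 0 < K -> 0 < L -> exists z0, 0 < z0 /\
  forall z, z0 <= z -> K * z + 1 <= exp (L * z).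
Proof.
move=> hK hL.
have hq : 0 <= 4 * K / (L * L) by apply: Rle_mult_inv_pos; nra.
exists (4 * K / (L * L) + 1); split; first lra.
move=> z hz.
have hz0 : 0 < z by lra.
have h1 : 4 * K <= L * L * z.
  have : 4 * K / (L * L) * (L * L) <= z * (L * L) by apply: Rmult_le_compat_r; nra.
  by rewrite /Rdiv Rmult_assoc Rinv_l ?Rmult_1_r; nra.
have -> : L * z = L * z / 2 + L * z / 2 by field.
rewrite exp_plus.
have h2 := exp_ineq1_le (L * z / 2).
have : (1 + L * z / 2) * (1 + L * z / 2) <= exp (L * z / 2) * exp (L * z / 2).
  apply: Rmult_le_compat; nra.
nra.
Qed.

Local Open Scope R_scope.
Lemma side (A B : finType) (F : A -> B -> bool) (C δ c β Z0 : R) (N : nat) (W : {set B}) :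
  0 < C -> 0 < δ -> c = C / ln 2 -> β = / (80 * c * c + 4 * c + 1) ->
  (3 <= N)%nat -> INR N <= INR (N - 2) * exp β ->
  20 <= Z0 ->
  (forall z, Z0 <= z -> 2 * c * z + 2 <= exp z) ->
  (forall z, Z0 <= z -> 2 * c * z + 2 <= δ * exp z) ->
  (forall z, Z0 <= z -> c * z + 1 <= exp (z / 2)) ->
  (forall z, Z0 <= z -> c * z + 1 <= exp (z / 20)) ->
  exp Z0 <= INR #|A| -> exp Z0 <= INR #|B| ->
  bipartite_ramsey F C -> δ * INR #|B| <= INR #|W| ->
  2 * INR #|[set a | (N * #|[set b in W | F a b]| <= #|W|)%nat]| <= exp (ln (INR #|A|) / 5).
Proof.
move=> hC hd ec eb hN hNb hZ0 L1 L2 L3 L4 hAZ hBZ hR hW.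
set a := INR #|A| in hAZ *; set b := INR #|B| in hBZ hW.
have ha : 0 < a by have := exp_pos Z0; lra.
have hb : 0 < b by have := exp_pos Z0; lra.
set X := ln a; set Y := ln b.
have hX : Z0 <= X by rewrite -(ln_exp Z0); apply: ln_le' => //; exact: exp_pos.
have hY : Z0 <= Y by rewrite -(ln_exp Z0); apply: ln_le' => //; exact: exp_pos.
have eA : exp X = a by apply: exp_ln.
have eB : exp Y = b by apply: exp_ln.
have hln2 := ln2_bounds.
have hc : 0 < c by rewrite ec; apply: Rdiv_lt_0_compat; lra.
have hlogA : C * log2 a = c * X by rewrite /log2 ec /X; field; lra.
have hlogB : C * log2 b = c * Y by rewrite /log2 ec /Y; field; lra.
have e2 : INR 2 = 2 by rewrite /=; lra.
have [tA [hA1 hA2]] := @ceil_nat (c * X) ltac:(nra).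
have [tB [hB1 hB2]] := @ceil_nat (c * Y) ltac:(nra).
have hA1' : C * log2 (INR #|A|) <= INR tA by rewrite -/a hlogA.
have hB1' : C * log2 (INR #|B|) <= INR tB by rewrite -/b hlogB.
have hpre : (tA.*2 <= #|A|)%nat.
  apply: INR_leq_inv; rewrite -muln2 INR_muln e2 -/a -eA; have := L1 X hX; lra.
have hrel := INR_leq (relation hR hA1' hB1' hpre).
rewrite INR_muln INR_expn e2 -/b -muln2 in hrel.
rewrite -Rpower_pow in hrel; last lra.
rewrite /Rpower INR_muln e2 in hrel.
have e1 : exp (INR tA * 2 * ln 2) <= exp (2 * (c * X + 1) * ln 2) by apply: exp_le'; nra.
have hYh := L3 Y hY.
have htB0 : 0 <= INR tB by apply: pos_INR.
have h3 : b <= exp (2 * (c * X + 1) * ln 2) * exp (Y / 2).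
  apply: (Rle_trans _ _ _ hrel); apply: Rmult_le_compat => //; try lra.
  by left; apply: exp_pos.
have eY : b = exp (Y / 2) * exp (Y / 2) by rewrite -exp_plus -eB; congr exp; field.
have hYp := exp_pos (Y / 2).
have h4 : exp (Y / 2) <= exp (2 * (c * X + 1) * ln 2) by nra.
have hYX : Y <= 4 * (c * X + 1) by have := exp_le_inv h4; nra.
set S := [set a0 | (N * #|[set b0 in W | F a0 b0]| <= #|W|)%nat].
have hdeg : forall a0, a0 \in S -> (N * #|[set b0 in W | F a0 b0]| <= #|W|)%nat.
  by move=> a0; rewrite inE.
have hpreB : (tB.*2 <= #|W|)%nat.
  apply: INR_leq_inv; rewrite -muln2 INR_muln e2; have := L2 Y hY; nra.
have [T [sT [cT hT]]] := greedy hdeg hpreB.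
set Sk := [set a0 in S | [forall b0 in T, ~~ F a0 b0]] in hT.
have hSk : (#|Sk| < tA)%nat.
  rewrite ltnNge; apply/negP => hle.
  have [TA [sTA cTA]] := exists_sub hle.
  apply: (hR tA tB hA1' hB1'); exists TA, T; split => //; split => //; right.
  move=> x y /(subsetP sTA); rewrite inE => /andP [_ /forall_inP h] hy; exact: h.
have hnat : (expn (N - 2) tB * #|S| < expn N tB * tA)%nat.
  apply: (leq_trans _ (_ : expn N tB * #|Sk|.+1 <= expn N tB * tA)%nat); last first.
    by rewrite leq_mul2l hSk orbT.
  rewrite mulnS; apply: (leq_ltn_trans hT); rewrite -[X in (X < _)%nat]add0n ltn_add2r.
  by rewrite expn_gt0; apply/orP; left; lia.
have hreal : INR (N - 2) ^ tB * INR #|S| < INR N ^ tB * INR tA.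
  by rewrite -!INR_expn -!INR_muln; apply: lt_INR; apply/ltP.
have hN2 : 0 < INR (N - 2) by change 0 with (INR 0); apply: lt_INR; apply/ltP; lia.
have hpowN : INR N ^ tB <= INR (N - 2) ^ tB * exp β ^ tB.
  rewrite -Rpow_mult_distr; apply: pow_incr; split => //; apply: pos_INR.
have hP := pow_lt _ tB hN2.
have htA0 : 0 <= INR tA by apply: pos_INR.
have hS : INR #|S| < exp β ^ tB * INR tA.
  have h5 : INR (N - 2) ^ tB * INR #|S| < INR (N - 2) ^ tB * (exp β ^ tB * INR tA).
    rewrite -Rmult_assoc; apply: (Rlt_le_trans _ _ _ hreal).
    by apply: Rmult_le_compat_r.
  by apply: (Rmult_lt_reg_l _ _ _ hP).
have ebeta : exp β ^ tB = exp (INR tB * β).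
  rewrite -Rpower_pow; last exact: exp_pos. by rewrite /Rpower ln_exp.
have hbeta : INR tB * β <= X / 20 + 1.
  have hD : 0 < 80 * c * c + 4 * c + 1 by nra.
  have hX0 : 0 <= X by lra.
  have h6 : INR tB <= 4 * c * c * X + 4 * c + 1 by nra.
  have h7 : 4 * c * c * X + 4 * c + 1 <= (80 * c * c + 4 * c + 1) * (X / 20 + 1) by nra.
  have hb0 : 0 < β by rewrite eb; apply: Rinv_0_lt_compat.
  have -> : X / 20 + 1 = β * ((80 * c * c + 4 * c + 1) * (X / 20 + 1)).
    by rewrite eb; field; lra.
  rewrite Rmult_comm; apply: Rmult_le_compat_l; lra.
have h8 : exp β ^ tB * INR tA <= exp (X / 20 + 1) * exp (X / 20).
  rewrite ebeta; apply: Rmult_le_compat; try lra.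
  - by left; apply: exp_pos.
  - exact: exp_le'.
  - have := L4 X hX; lra.
have e10 : exp (X / 20 + 1) * exp (X / 20) = exp 1 * exp (X / 10).
  by rewrite -!exp_plus; congr exp; field.
have e5 : exp (X / 5) = exp (X / 10) * exp (X / 10).
  by rewrite -!exp_plus; congr exp; field.
have hE1 : 2 <= exp 1 by have := exp_ineq1 1; lra.
have hE10 : 2 * exp 1 <= exp (X / 10).
  apply: (Rle_trans _ (exp 1 * exp 1)); first nra.
  rewrite -exp_plus; apply: exp_le'; lra.
have hp10 := exp_pos (X / 10).
rewrite -/X e5; nra.
Qed.

Lemma ram_neg (A B : finType) (F : A -> B -> bool) C :
  bipartite_ramsey F C -> bipartite_ramsey (fun x y => ~~ F x y) C.
Proof.
move=> h t1 t2 h1 h2 [T1 [T2 [c1 [c2 hh]]]]; apply: (h t1 t2 h1 h2).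
exists T1, T2; split => //; split => //; case: hh => hh; [right|left] => x y hx hy.
- exact: hh.
- by have := hh x y hx hy; rewrite negbK.
Qed.

Lemma ram_flip (A B : finType) (F : A -> B -> bool) C :
  bipartite_ramsey F C -> bipartite_ramsey (fun y x => F x y) C.
Proof.
move=> h t1 t2 h1 h2 [T1 [T2 [c1 [c2 hh]]]]; apply: (h t2 t1 h2 h1).
exists T2, T1; split => //; split => //; case: hh => hh; [left|right] => x y hx hy; exact: hh.
Qed.

Lemma rich_from_side (A B : finType) (F : A -> B -> bool) (C δ c β Z0 : R) (N : nat) :
  0 < C -> 0 < δ -> c = C / ln 2 -> β = / (80 * c * c + 4 * c + 1) ->
  (3 <= N)%nat -> INR N <= INR (N - 2) * exp β ->
  20 <= Z0 ->
  (forall z, Z0 <= z -> 2 * c * z + 2 <= exp z) ->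
  (forall z, Z0 <= z -> 2 * c * z + 2 <= δ * exp z) ->
  (forall z, Z0 <= z -> c * z + 1 <= exp (z / 2)) ->
  (forall z, Z0 <= z -> c * z + 1 <= exp (z / 20)) ->
  exp Z0 <= INR #|A| -> exp Z0 <= INR #|B| ->
  bipartite_ramsey F C -> rich_side F δ (/ INR N).
Proof.
move=> hC hd ec eb hN hNb hZ0 L1 L2 L3 L4 hAZ hBZ hR W hW.
have s1 := side hC hd ec eb hN hNb hZ0 L1 L2 L3 L4 hAZ hBZ hR hW.
have s2 := side hC hd ec eb hN hNb hZ0 L1 L2 L3 L4 hAZ hBZ (ram_neg hR) hW.
set S1 := [set a | _] in s1; set S2 := [set a | _] in s2.
have hNp : 0 < INR N by change 0 with (INR 0); apply: lt_INR; apply/ltP; lia.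
have conv : forall d, INR d <= / INR N * INR #|W| -> (N * d <= #|W|)%nat.
  move=> d hd'; apply: INR_leq_inv; rewrite INR_muln.
  have := Rmult_le_compat_l _ _ _ (Rlt_le _ _ hNp) hd'.
  by rewrite -Rmult_assoc Rinv_r ?Rmult_1_l; lra.
have hsub : (#|[set a | Rleb (INR #|[set b in W | F a b]|) (/ INR N * INR #|W|)
        || Rltb (INR #|[set b in W | ~~ F a b]|) (/ INR N * INR #|W|)]| <= #|S1 :|: S2|)%nat.
  apply: subset_leq_card; apply/subsetP => a; rewrite !inE /Rleb /Rltb.
  case: (Rle_dec _ _) => [h|_] /=; first by rewrite (conv _ h).
  case: (Rlt_dec _ _) => [h|_] //= _; by rewrite (conv _ (Rlt_le _ _ h)) orbT.
have := INR_leq (leq_trans hsub (leq_card_setU S1 S2)); rewrite INR_addn.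
rewrite /Rpower; have -> : 1 / 5 * ln (INR #|A|) = ln (INR #|A|) / 5 by field.
lra.
Qed.

Local Close Scope R_scope.

Theorem lemma2p5 :
  forall C delta : R, (0 < C)%R -> (0 < delta)%R ->
  exists (eps : R) (n0 : nat), (0 < eps)%R /\
    forall (V1 V2 : finType) (E : V1 -> V2 -> bool),
      (n0 <= #|V1|)%N -> (n0 <= #|V2|)%N ->
      bipartite_ramsey E C ->
      bipartite_rich E delta eps.
Proof.
Local Open Scope R_scope.
move=> C δ hC hd.
have hln2 := ln2_bounds.
set c := C / ln 2.
have hc : 0 < c by apply: Rdiv_lt_0_compat; lra.
set β := / (80 * c * c + 4 * c + 1).
have hβ : 0 < β by apply: Rinv_0_lt_compat; nra.
have [M [hM1 _]] := @ceil_nat (2 / β) ltac:(apply: Rlt_le; apply: Rdiv_lt_0_compat; lra).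
have hN : (3 <= M + 3)%nat by lia.
have hNb : INR (M + 3) <= INR (M + 3 - 2) * exp β.
  have -> : (M + 3 - 2 = M + 1)%nat by lia.
  rewrite !INR_addn.
  have hM0 : 0 <= INR M by apply: pos_INR.
  have h2 : 2 <= β * INR M.
    have := Rmult_le_compat_l _ _ _ (Rlt_le _ _ hβ) hM1.
    by rewrite /Rdiv Rmult_comm Rmult_assoc Rinv_l ?Rmult_1_r; lra.
  have := exp_ineq1_le β; simpl INR; nra.
have [z1 [hz1 L1]] := @exp_growth (2 * c + 2) 1 ltac:(lra) ltac:(lra).
have [z2 [hz2 L2]] := @exp_growth ((2 * c + 2) / δ) 1 ltac:(apply: Rdiv_lt_0_compat; lra) ltac:(lra).
have [z3 [hz3 L3]] := @exp_growth c (/ 2) hc ltac:(lra).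
have [z4 [hz4 L4]] := @exp_growth c (/ 20) hc ltac:(lra).
set Z0 := Rmax 20 (Rmax z1 (Rmax z2 (Rmax z3 z4))).
have hZ0 : 20 <= Z0 by apply: Rmax_l.
have hZ1 : z1 <= Z0 by rewrite /Z0; apply: (Rle_trans _ _ _ _ (Rmax_r _ _)); apply: Rmax_l.
have hZ2 : z2 <= Z0.
  rewrite /Z0; apply: (Rle_trans _ _ _ _ (Rmax_r _ _)); apply: (Rle_trans _ _ _ _ (Rmax_r _ _)); apply: Rmax_l.
have hZ3 : z3 <= Z0.
  rewrite /Z0; apply: (Rle_trans _ _ _ _ (Rmax_r _ _)); apply: (Rle_trans _ _ _ _ (Rmax_r _ _)).
  apply: (Rle_trans _ _ _ _ (Rmax_r _ _)); apply: Rmax_l.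
have hZ4 : z4 <= Z0.
  rewrite /Z0; apply: (Rle_trans _ _ _ _ (Rmax_r _ _)); apply: (Rle_trans _ _ _ _ (Rmax_r _ _)).
  apply: (Rle_trans _ _ _ _ (Rmax_r _ _)); apply: Rmax_r.
have M1 : forall z, Z0 <= z -> 2 * c * z + 2 <= exp z.
  move=> z hz; have := L1 z ltac:(lra); rewrite Rmult_1_l; nra.
have M2 : forall z, Z0 <= z -> 2 * c * z + 2 <= δ * exp z.
  move=> z hz; have := L2 z ltac:(lra); rewrite Rmult_1_l => h.
  have := Rmult_le_compat_l _ _ _ (Rlt_le _ _ hd) h.
  have -> : δ * ((2 * c + 2) / δ * z + 1) = (2 * c + 2) * z + δ by field; lra.
  nra.
have M3 : forall z, Z0 <= z -> c * z + 1 <= exp (z / 2).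
  move=> z hz; have := L3 z ltac:(lra); by have -> : / 2 * z = z / 2 by field.
have M4 : forall z, Z0 <= z -> c * z + 1 <= exp (z / 20).
  move=> z hz; have := L4 z ltac:(lra); by have -> : / 20 * z = z / 20 by field.
have [n0 [hn0 _]] := @ceil_nat (exp Z0) ltac:(apply: Rlt_le; apply: exp_pos).
exists (/ INR (M + 3)), n0; split.
  apply: Rinv_0_lt_compat; change 0 with (INR 0); apply: lt_INR; apply/ltP; lia.
move=> V1 V2 E h1 h2 hR.
have hV1 : exp Z0 <= INR #|V1| by apply: (Rle_trans _ _ _ hn0); apply: INR_leq.
have hV2 : exp Z0 <= INR #|V2| by apply: (Rle_trans _ _ _ hn0); apply: INR_leq.
split.
- exact: (rich_from_side (A:=V2) (B:=V1) hC hd erefl erefl hN hNb hZ0 M1 M2 M3 M4 hV2 hV1 (ram_flip hR)).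
- exact: (rich_from_side (A:=V1) (B:=V2) hC hd erefl erefl hN hNb hZ0 M1 M2 M3 M4 hV1 hV2 hR).
Qed.
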